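(* Let $k=-\frac{n}{2}(n-2)$. The class $\delta^k\in E_*\langle\det\rangle$ is invariant under the (twisted) action of $F$.
   Context: Let $p$ be an odd prime and $n=p-1$. Let $E=E_n$ be Morava $E$--theory with $E_*=\mathbb{W}[\![u_1,\dots,u_{n-1}]\!][u^{\pm1}]$, $\mathbb{W}=W(\mathbb{F}_{p^n})$, associated to the Honda formal group law of height $n$, with its action of the Morava stabilizer group $\mathbb{G}_n=\mathbb{S}_n\rtimes\mathrm{Gal}(\mathbb{F}_{p^n}/\mathbb{F}_p)$ ($\mathbb{S}_n$ the automorphism group of the Honda formal group law over $\mathbb{F}_{p^n}$). Let $\det\colon\mathbb{G}_n\to\mathbb{Z}_p^\times$ be the determinant (reduced norm) homomorphism. $E_*\langle\det\rangle$ denotes $E_*$ with the twisted action $\widehat{g}(x)=g(x)\det(g)$. Let $\omega\in\mathbb{W}$ be a primitive $(p^n-1)$--st root of unity; identifying $\mathbb{W}^\times$ with a subgroup of $\mathbb{S}_n$, let $\tau=\omega^{(p^n-1)/n^2}\in\mathbb{S}_n$, and write $\eta=\omega^{(p^n-1)/n^2}$ when viewed as an element of $\mathbb{W}\subseteq E_0$; then $\det(\tau)=\eta^{(p^n-1)/n}$. $F=\langle\zeta,\tau\rangle\cong C_p\rtimes C_{n^2}$ is a maximal finite subgroup of $\mathbb{S}_n$ with $\zeta$ of order $p$, $\tau^{-1}\zeta\tau=\zeta^e$ for $e$ a generator of $(\mathbb{Z}/p)^\times$, and $\det(\zeta)=1$. The element $\delta\in E_{2p}$ is the unit, invariant under $C_p=\langle\zeta\rangle$,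 appearing in the Hopkins--Miller computation $\widehat{H}^*(C_p,E_* )\cong\mathbb{F}_{p^n}[a,b^{\pm1},\delta^{\pm1}]/(a^2)$; it satisfies $\tau(\delta)=\eta^{-p}\delta$. *)

(* Defs.v *)
From HB Require Import structures.
From mathcomp Require Import all_boot all_order all_algebra all_fingroup.
Set Implicit Arguments. Unset Strict Implicit. Unset Printing Implicit Defensive.
Import GRing.Theory.
Local Open Scope ring_scope.

Definition twisted_act (gT : finGroupType) (R : comUnitRingType)
  (act : gT -> R -> R) (det : gT -> R) (g : gT) (x : R) : R :=
  act g x * det g.

(* k = - n (n-2) / 2  (n = p-1 is even, so this is an integer). *)
Definition kexp (n : nat) : int := - ((n * (n - 2))%/ 2)%N%:Z.

(* Main.v *)
Require Import Defs.
From HB Require Import structures.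
From mathcomp Require Import all_boot all_order all_algebra all_fingroup.
From mathcomp Require Import zify.
Import GRing.Theory.

Lemma binpow (N a : nat) : exists t, (1+N)^a = 1 + a*N + 'C(a,2)*N^2 + N^3*t.
Proof.
elim: a => [|a [t IH]]; first by exists 0; rewrite bin0n; lia.
exists (t*(1+N) + 'C(a,2)).
rewrite expnS IH binS bin1.
set C := 'C(a,2). nia.
Qed.

Lemma bin2m k : 'C((2*k+2), 2) = (k+1)*(2*k+1).
Proof.
rewrite bin2.
have -> : ((2 * k + 2) * (2 * k + 2).-1) = ((k+1)*(2*k+1)).*2 by lia.
by rewrite doubleK.
Qed.

Lemma L1 N r1 p M s j : (p*M + N*r1 = N^2*s)%N -> (N*r1*j + p*M*j = N^2*(s*j))%N.
Proof. move=> H; rewrite mulnA -H; nia. Qed.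

Lemma L2 e p N M j : (e+p = N^2)%N -> (e*j*M + p*M*j = N^2*(M*j))%N.
Proof. move=> H; rewrite -H; nia. Qed.

Lemma pNle k : (2*k+3 <= (2*k+2)^2)%N.
Proof. nia. Qed.

Lemma arith k : let N := 2*k+2 in let p := 2*k+3 in
  exists r1 s, (p ^ N).-1 = N^2 * r1 /\ p * ((N*(N-2)) %/ 2) + N * r1 = N^2 * s.
Proof.
move=> N p.
have [t Ht] := binpow N N.
have hp : p = 1 + N by rewrite /p /N; lia.
have hM : (N*(N-2)) %/ 2 = (2*k+2)*k.
  have -> : N*(N-2) = ((2*k+2)*k)*2 by rewrite /N; lia.
  by rewrite mulnK.
rewrite hM hp Ht /N bin2m.
exists (1 + (k+1)*(2*k+1) + (2*k+2)*t), (2*k+1+t).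
split; nia.
Qed.

Local Open Scope ring_scope.

Theorem lemma4p15
  (p : nat) (Hp : prime p) (Hodd : odd p)
  (R : comUnitRingType)                 (* E_* (grading forgotten) *)
  (gT : finGroupType) (F : {group gT}) (zeta tau : gT) (e : nat)
  (act : gT -> {rmorphism R -> R})      (* action of F on E_* by ring automorphisms *)
  (det : gT -> R)                       (* determinant, viewed in E_0 *)
  (omega delta : R)
  (HF : F :=: <<[set zeta; tau]>>%g)
  (Hzeta_ord : #[zeta]%g = p) (Htau_ord : #[tau]%g = ((p.-1) ^ 2)%N)
  (He_cop : coprime e p)
  (He_gen : forall m : nat, (0 < m < p.-1)%N -> (e ^ m %% p != 1)%N)
  (Hconj : (zeta ^ tau = zeta ^+ e)%g)
  (Hact1 : forall x, act 1%g x = x)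
  (HactM : forall g h x, g \in F -> h \in F -> act (g * h)%g x = act g (act h x))
  (Homega : ((p ^ p.-1).-1).-primitive_root omega)
  (Hact_omega : forall g, g \in F -> act g omega = omega)   (* F acts W-linearly *)
  (HdetM : forall g h, g \in F -> h \in F -> det (g * h)%g = det g * det h)
  (Hdet_zeta : det zeta = 1)
  (Hdet_tau : det tau =
     (omega ^+ (((p ^ p.-1).-1) %/ (p.-1 ^ 2))) ^+ (((p ^ p.-1).-1) %/ p.-1))
  (Hdelta_unit : delta \is a GRing.unit)
  (Hdelta_zeta : act zeta delta = delta)
  (Hdelta_tau : act tau delta =
     (omega ^+ (((p ^ p.-1).-1) %/ (p.-1 ^ 2))) ^- p * delta) :
  forall g, g \in F ->
    twisted_act (fun g x => act g x) det g (delta ^ kexp p.-1) = delta ^ kexp p.-1.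
Proof.
move=> g Hg.
have [k Hk] : exists k, p = (2*k+3)%N.
  have p2 := prime_gt1 Hp.
  have := odd_double_half p; rewrite Hodd.
  exists (p./2 - 1)%N; lia.
set N := p.-1.
have HN : N = (2*k+2)%N by rewrite /N Hk; lia.
set q := (p ^ N).-1%N.
have [r1 [s [Hq Hs]]] := arith k.
rewrite -HN -Hk -/q in Hq Hs.
have NSpos : (0 < N ^ 2)%N by rewrite HN; lia.
have Ha : (q %/ N ^ 2)%N = r1 by rewrite Hq mulKn.
have HqN : (q %/ N)%N = (N * r1)%N.
  have N0 : (0 < N)%N by rewrite HN; lia.
  by rewrite Hq -mulnn -mulnA mulKn.
rewrite -/N -/q Ha HqN in Hdet_tau Hdelta_tau.
set eta := omega ^+ r1.
rewrite -/eta in Hdet_tau Hdelta_tau.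
have Heta1 : eta ^+ (N ^ 2) = 1.
  by rewrite /eta -exprM mulnC -Hq (UnityRootTheory.prim_expr_order Homega).
set e' := (N ^ 2 - p)%N.
have Hep : (e' + p = N ^ 2)%N.
  by rewrite /e' subnK // HN Hk pNle.
have Hinv : (eta ^+ p)^-1 = eta ^+ e'.
  have h : eta ^+ p * eta ^+ e' = 1 by rewrite -exprD addnC Hep.
  have u : eta ^+ p \is a GRing.unit by apply/unitrPr; exists (eta ^+ e').
  by rewrite -[RHS](mulKr u) h mulr1.
rewrite Hinv in Hdelta_tau.
have Heta_act : forall g, g \in F -> act g eta = eta.
  by move=> h Hh; rewrite /eta rmorphXn /= Hact_omega.
have Hdet1 : det 1%g = 1.
  have zF : zeta \in F by rewrite HF mem_gen // !inE eqxx.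
  have -> : (1 = zeta ^+ #[zeta])%g by rewrite expg_order.
  elim: #[zeta]%g => [|m IH]; first by rewrite expg0; have := HdetM _ _ zF (group1 F); rewrite mulg1 Hdet_zeta mul1r.
  by rewrite expgS HdetM ?groupX // IH Hdet_zeta mulr1.
have ueta : eta \is a GRing.unit.
  apply/unitrPr; exists (eta ^+ (N ^ 2).-1); rewrite -exprS prednK //.
have Claim : forall n (c : 'I_n -> gT), (forall i, c i \in [set zeta; tau]) ->
   (\prod_i c i \in F)%g /\ exists j : nat,
    act (\prod_i c i)%g delta = eta ^+ (e' * j) * delta /\ det (\prod_i c i)%g = eta ^+ (N * r1 * j).
  elim=> [|n IH] c Hc.
    by rewrite big_ord0; split; [exact: group1 | exists 0%N; rewrite Hact1 Hdet1 !muln0 expr0 mul1r].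
  have [HprF [j [Hj1 Hj2]]] := IH (fun i => c (lift ord0 i)) (fun i => Hc _).
  have c0F : c ord0 \in F by rewrite HF mem_gen.
  rewrite big_ord_recl; split; first exact: groupM.
  move: c0F; have := Hc ord0; rewrite !inE => /orP [] /eqP -> c0F.
    exists j; rewrite HactM // HdetM // Hj1 Hj2 Hdet_zeta mul1r rmorphM /= rmorphXn /=.
    by rewrite Heta_act // Hdelta_zeta.
  exists j.+1; rewrite HactM // HdetM // Hj1 Hj2 Hdet_tau rmorphM /= rmorphXn /=.
  rewrite Heta_act // Hdelta_tau.
  by split; rewrite mulnS exprD // mulrCA mulrA.
have [j [Hj1 Hj2]] : exists j : nat, act g delta = eta ^+ (e' * j) * delta /\ det g = eta ^+ (N * r1 * j).
  move: Hg; rewrite HF => /gen_prodgP [n [c Hc ->]].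
  by have [_ H] := Claim n c Hc.
rewrite /twisted_act /kexp -exprnN.
set M := ((N * (N - 2)) %/ 2)%N.
rewrite -/M in Hs.
have udM : delta ^+ M \is a GRing.unit by rewrite unitrX.
rewrite rmorphV //= rmorphXn /= Hj1 Hj2 exprMn -exprM invrM ?(unitrX _ ueta) // -mulrA.
have -> : eta ^+ (N * r1 * j) = eta ^+ (e' * j * M).
  rewrite -(expr_mod _ Heta1) -[RHS](expr_mod _ Heta1); congr (_ ^+ _); apply/eqP.
  rewrite -(eqn_modDr (p * M * j)).
  rewrite (_ : (N * r1 * j + p * M * j = N ^ 2 * (s * j))%N); last exact: L1.
  rewrite (_ : (e' * j * M + p * M * j = N ^ 2 * (M * j))%N); last exact: L2.
  by rewrite !modnMr.
by rewrite mulVr ?(unitrX _ ueta) // mulr1.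
Qed.
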